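(* Let $G$ be a connected simple graph on $n\geq 3$ vertices. Then $\operatorname{reg}(G)<\frac{n}{2}$.
   Context: For a simple graph $G$ with vertex set $\{x_1,\dots,x_n\}$, $R=K[x_1,\dots,x_n]$ for a field $K$, and the edge ideal is $I(G)=\langle x_ix_j \mid \{x_i,x_j\}\in E(G)\rangle$. We write $\operatorname{reg}(G)$ for the Castelnuovo–Mumford regularity $\operatorname{reg}(R/I(G))=\max\{j-i\mid \beta_{i,j}(R/I(G))\neq 0\}$. *)

(* Defs.v *)
(* Graded Betti numbers of R/I(G), R = K[x_0..x_(n-1)],
   computed as dim_K Tor_i^R(K, R/I(G))_j via the (multigraded) Koszul
   complex K(x_0..x_(n-1)) (x) R/I(G). *)
From mathcomp Require Import all_boot all_order all_algebra.
Set Implicit Arguments. Unset Strict Implicit. Unset Printing Implicit Defensive.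
Import GRing.Theory.
Local Open Scope ring_scope.

(* the monomial x^b lies in the edge ideal I(G) of the graph e on 'I_n *)
Definition in_edge_ideal (n : nat) (e : rel 'I_n) (b : 'I_n -> nat) : bool :=
  [exists u, exists v, [&& e u v, (0 < b u)%N & (0 < b v)%N]].

Definition shift_exp (n : nat) (a : 'I_n -> nat) (F : {set 'I_n}) : 'I_n -> nat :=
  fun k => (a k - (k \in F))%N.

(* e_F (x) x^(a - e_F) is a nonzero basis element of the multidegree-a part
   of the Koszul complex K(x) (x) R/I(G) *)
Definition kbasis (n : nat) (e : rel 'I_n) (a : 'I_n -> nat) (F : {set 'I_n}) : bool :=
  [forall k in F, (0 < a k)%N] && ~~ in_edge_ideal e (shift_exp a F).

Definition kbasis_deg (n : nat) (e : rel 'I_n) (a : 'I_n -> nat) (i : nat)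
  : {set {set 'I_n}} := [set F | kbasis e a F & #|F| == i].

(* Koszul sign of e_F -> e_(F minus k) *)
Definition ksign (K : fieldType) (n : nat) (F G : {set 'I_n}) : K :=
  if [pick k in F :\: G] is Some k
  then (-1) ^+ #|[set l in F | (val l < val k)%N]| else 0.

(* matrix (row-vector convention) of the Koszul differential from homological
   degree i to i-1, in multidegree a; rows/columns indexed by all subsets,
   zero outside the relevant bases *)
Definition kdiff (K : fieldType) (n : nat) (e : rel 'I_n) (a : 'I_n -> nat) (i : nat)
  : 'M[K]_(#|{set 'I_n}|) :=
  \matrix_(p, q)
    (let F := enum_val p in let G := enum_val q in
     if [&& F \in kbasis_deg e a i, kbasis e a G, G \subset F & #|F :\: G| == 1%N]
     then ksign K F G else 0).

(* multigraded Betti number beta_{i,a}(R/I(G)) = dim H_i of the complex *)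
Definition betti_mg (K : fieldType) (n : nat) (e : rel 'I_n) (a : 'I_n -> nat) (i : nat)
  : nat :=
  (#|kbasis_deg e a i| - \rank (kdiff K e a i) - \rank (kdiff K e a i.+1))%N.

Definition betti (K : fieldType) (n : nat) (e : rel 'I_n) (i j : nat) : nat :=
  (\sum_(a : {ffun 'I_n -> 'I_j.+1} | \sum_k val (a k) == j)
      betti_mg K e (fun k => val (a k)) i)%N.

(* Main.v *)
Require Import Defs.
From mathcomp Require Import all_boot all_order all_algebra.
From mathcomp Require Import zify.
Set Implicit Arguments. Unset Strict Implicit. Unset Printing Implicit Defensive.
Import GRing.Theory.
Local Open Scope ring_scope.

Definition deg (n : nat) (good : pred {set 'I_n}) (i : nat) : {set {set 'I_n}} :=
  [set F | good F & #|F| == i].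

Definition Dm (K : fieldType) (n : nat) (good : pred {set 'I_n}) (i : nat)
  : 'M[K]_(#|{set 'I_n}|) :=
  \matrix_(p, q)
    (let F := enum_val p in let G := enum_val q in
     if [&& F \in deg good i, good G, G \subset F & #|F :\: G| == 1%N]
     then ksign K F G else 0).

Definition hh (K : fieldType) (n : nat) (good : pred {set 'I_n}) (i : nat) : nat :=
  (#|deg good i| - \rank (Dm K good i) - \rank (Dm K good i.+1))%N.

Lemma betti_mg_hh (K : fieldType) n (e : rel 'I_n) a i :
  betti_mg K e a i = hh K (kbasis e a) i.
Proof. by []. Qed.

Lemma hh_ext (K : fieldType) n (g1 g2 : pred {set 'I_n}) i :
  g1 =1 g2 -> hh K g1 i = hh K g2 i.
Proof.
move=> E.
have Ed : forall i, deg g1 i = deg g2 i.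
  by move=> k; apply/setP => F; rewrite !inE; congr (_ && _); exact: E.
have ED : forall i, Dm K g1 i = Dm K g2 i.
  by move=> k; apply/matrixP => p q; rewrite !mxE /= Ed E.
by rewrite /hh Ed !ED.
Qed.

Lemma rank_split (K : fieldType) m (M U V B : 'M[K]_m) :
  (U <= M)%MS -> (V <= M)%MS -> V *m B = 0 ->
  (\rank (U *m B) + \rank V <= \rank M)%N.
Proof.
move=> sUM sVM VB0.
have h1 := mxrank_sum_cap U V.
have h2 := mxrank_mul_ker U B.
have h3 : (\rank (U :&: V) <= \rank (U :&: kermx B))%N.
  by apply: mxrankS; apply: capmxS => //; rewrite sub_kermx VB0.
have h4 : (\rank (U + V) <= \rank M)%N by apply: mxrankS; rewrite addsmx_sub sUM sVM.
lia.
Qed.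

Definition PX (K : fieldType) n (v : 'I_n) (b : bool) : 'M[K]_(#|{set 'I_n}|) :=
  diag_mx (\row_(p < #|{set 'I_n}|) (if (v \in (enum_val p : {set 'I_n})) == b then 1 else 0)).

Lemma DmX (K : fieldType) n (good : pred {set 'I_n}) v i :
  PX K v true *m Dm K good i *m PX K v true = Dm K (fun F => good F && (v \in F)) i.
Proof.
apply/matrixP => p q; rewrite mul_mx_diag mul_diag_mx !mxE /deg !inE /=.
case: (v \in enum_val p); case: (v \in enum_val q);
  rewrite /= ?andbF ?andbT ?mul1r ?mulr1 ?mul0r ?mulr0 //.
Qed.

Lemma DmY (K : fieldType) n (good : pred {set 'I_n}) v i :
  PX K v false *m Dm K good i = Dm K (fun F => good F && (v \notin F)) i.
Proof.
apply/matrixP => p q; rewrite mul_diag_mx !mxE /deg !inE.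
case vF: (v \in enum_val p); rewrite /= ?andbF ?mul0r ?mul1r ?andbT //=.
case sGF: (enum_val q \subset enum_val p); rewrite ?andbF //=.
have -> : v \notin enum_val q by apply/negP => /(subsetP sGF); rewrite vF.
by rewrite andbT.
Qed.

Lemma DmYX (K : fieldType) n (good : pred {set 'I_n}) v i :
  PX K v false *m Dm K good i *m PX K v true = 0.
Proof.
apply/matrixP => p q; rewrite mul_mx_diag mul_diag_mx !mxE /deg !inE.
case vF: (v \in enum_val p); case vG: (v \in enum_val q);
  rewrite /= ?mul0r ?mulr0 ?mul1r ?mulr1 //.
case sGF: (enum_val q \subset enum_val p); rewrite ?andbF //=.
by move: (subsetP sGF v vG); rewrite vF.
Qed.

Lemma rank_DmXY (K : fieldType) n (good : pred {set 'I_n}) v i :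
  (\rank (Dm K (fun F => good F && (v \in F)) i)
   + \rank (Dm K (fun F => good F && (v \notin F)) i) <= \rank (Dm K good i))%N.
Proof.
rewrite -DmX -DmY; apply: rank_split; rewrite ?submxMl //.
exact: DmYX.
Qed.

Lemma card_degXY n (good : pred {set 'I_n}) v i :
  #|deg good i| = (#|deg (fun F => good F && (v \in F)) i|
                  + #|deg (fun F => good F && (v \notin F)) i|)%N.
Proof.
rewrite -(cardsID [set F : {set 'I_n} | v \in F] (deg good i)).
have -> : deg good i :&: [set F : {set 'I_n} | v \in F] = deg (fun F => good F && (v \in F)) i.
  by apply/setP => F; rewrite !inE; case: (v \in F); rewrite ?andbT ?andbF.
have -> : deg good i :\: [set F : {set 'I_n} | v \in F] = deg (fun F => good F && (v \notin F)) i.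
  by apply/setP => F; rewrite !inE; case: (v \in F); rewrite ?andbT ?andbF.
by [].
Qed.

Lemma hh_split (K : fieldType) n (good : pred {set 'I_n}) v i :
  (hh K good i <= hh K (fun F => good F && (v \in F)) i
                  + hh K (fun F => good F && (v \notin F)) i)%N.
Proof.
rewrite /hh (card_degXY good v i).
have := rank_DmXY K good v i; have := rank_DmXY K good v i.+1.
lia.
Qed.

Lemma ksign_sq (K : fieldType) n (F G : {set 'I_n}) x :
  x \in F :\: G -> ksign K F G * ksign K F G = 1.
Proof.
move=> xFG; rewrite /ksign; case: pickP => [y _|H]; last by rewrite H in xFG.
by rewrite -expr2 -exprM mulnC exprM sqrrN expr1n expr1n.
Qed.

Lemma rank_diag01 (K : fieldType) m (A : {pred 'I_m}) :
  (#|A| <= \rank (diag_mx (\row_p (if p \in A then 1%R else 0%R : K) : 'rV[K]_m)))%N.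
Proof.
pose R : 'M[K]_(#|A|, m) := \matrix_(r, p) (if p == enum_val r then 1 else 0).
have RD : R *m diag_mx (\row_p (if p \in A then 1%R else 0%R : K) : 'rV[K]_m) = R.
  apply/matrixP => r p; rewrite mul_mx_diag !mxE.
  case: eqP => [->|]; last by rewrite mul0r.
  by rewrite enum_valP mulr1.
have RR : R *m R^T = 1%:M.
  apply/matrixP => r s; rewrite !mxE (bigD1 (enum_val r)) //= big1 ?addr0.
    rewrite !mxE eqxx mul1r (inj_eq enum_val_inj) eq_sym.
    by case: (s == r).
  move=> p /negbTE pr; rewrite !mxE pr mul0r //.
have := mxrankM_maxl R R^T; rewrite RR mxrank1 -RD => h.
apply: (leq_trans h); exact: mxrankM_maxr.
Qed.

Lemma cone_rank (K : fieldType) n (good : pred {set 'I_n}) (k : 'I_n) (i : nat) :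
  (forall F : {set 'I_n}, k \notin F -> good (k |: F) = good F) ->
  (#|[set F in deg good i | k \in F]| <= \rank (Dm K good i))%N.
Proof.
move=> hk.
set X := [set F in deg good i | k \in F].
pose A := [pred p : 'I_#|{set 'I_n}| | enum_val p \in X].
pose d := (\row_p (if enum_val p \in X then 1%R else 0%R : K) : 'rV[K]_#|{set 'I_n}|).
pose Q : 'M[K]_#|{set 'I_n}| := \matrix_(q < #|{set 'I_n}|, p' < #|{set 'I_n}|)
  (if (k \notin (enum_val q : {set 'I_n})) && (k |: enum_val q == enum_val p')
   then ksign K (enum_val p') (enum_val q) else 0).
have cardA : #|A| = #|X|.
  rewrite -(card_imset _ (@enum_val_inj _ _)).
  apply: eq_card => F; apply/imsetP/idP => [[p pA ->] //|FX].
  by exists (enum_rank F); rewrite ?enum_rankK // unfold_in /= enum_rankK.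
have key : diag_mx d *m Dm K good i *m Q = diag_mx d.
  apply/matrixP => p p'; rewrite -mulmxA mul_diag_mx !mxE.
  case: (boolP (enum_val p \in X)) => hX; last first.
    by rewrite !mul0r mul0rn.
  rewrite mul1r.
  move: hX; rewrite /X !inE => /andP[/andP[gF cF] kF].
  set F := enum_val p in gF cF kF *.
  have gG : good (F :\ k) by rewrite -hk ?setD1K ?setD11.
  have FG : F :\: (F :\ k) = [set k].
    by apply/setP => x; rewrite !inE; case: eqP => [->|_] /=; rewrite ?kF //; case: (x \in F).
  rewrite (bigD1 (enum_rank (F :\ k))) //= big1 ?addr0.
    rewrite !mxE !enum_rankK /deg !inE gF cF gG subD1set FG cards1 eqxx /=.
    rewrite eqxx /= setD1K // (inj_eq enum_val_inj).
    case: eqP => [<-|_]; last by rewrite mulr0.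
    by rewrite (@ksign_sq K n _ _ k) // FG set11.
  move=> q qne; rewrite !mxE /=.
  case: ifP => [/and4P[_ gq sGF c1]|]; last by rewrite mul0r.
  case: ifP => [/andP[kG _]|]; last by rewrite mulr0.
  exfalso; move/negP: qne; apply; apply/eqP; apply: enum_val_inj.
  rewrite enum_rankK; apply/setP => x; rewrite !inE.
  case: (boolP (x == k)) => [/eqP -> | xk] /=; first by rewrite (negbTE kG).
  apply/idP/idP => [xG|xF]; first exact: (subsetP sGF).
  apply/negPn/negP => xG.
  have : ([set k; x] \subset F :\: enum_val q).
    by apply/subsetP => y; rewrite !inE => /orP[]/eqP->; rewrite ?kG ?kF ?xG ?xF.
  move/subset_leq_card; rewrite cards2 (eqP c1) eq_sym xk //.
rewrite -cardA.
apply: (leq_trans (rank_diag01 K A)); rewrite -/d -key.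
apply: (leq_trans (mxrankM_maxl _ _)); exact: mxrankM_maxr.
Qed.

Lemma cone_hh (K : fieldType) n (good : pred {set 'I_n}) (k : 'I_n) i :
  (forall F : {set 'I_n}, k \notin F -> good (k |: F) = good F) -> hh K good i = 0%N.
Proof.
move=> hk.
have c1 := @cone_rank K n good k i hk.
have c2 := @cone_rank K n good k i.+1 hk.
have cY : (#|[set F in deg good i | k \notin F]| <= #|[set F in deg good i.+1 | k \in F]|)%N.
  rewrite -(@card_in_imset _ _ (fun F => k |: F)).
    apply: subset_leq_card; apply/subsetP => G /imsetP[F].
    rewrite !inE => /andP[/andP[gF cF] kF] ->.
    by rewrite hk // gF cardsU1 kF (eqP cF) setU11 eqxx.
  move=> F1 F2; rewrite !inE => /andP[_ k1] /andP[_ k2] E.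
  by rewrite -(setU1K k1) E setU1K.
have cs : #|deg good i| = (#|[set F in deg good i | k \in F]|
                          + #|[set F in deg good i | k \notin F]|)%N.
  rewrite -(cardsID [set F : {set 'I_n} | k \in F] (deg good i)).
  have -> : deg good i :&: [set F : {set 'I_n} | k \in F] = [set F in deg good i | k \in F].
    by apply/setP => F; rewrite !inE.
  have -> : deg good i :\: [set F : {set 'I_n} | k \in F] = [set F in deg good i | k \notin F].
    by apply/setP => F; rewrite !inE andbC.
  by [].
rewrite /hh; lia.
Qed.

Definition indep n (e : rel 'I_n) (W : {set 'I_n}) : bool :=
  ~~ [exists u, exists v, [&& e u v, u \in W & v \in W]].
Definition gST n (e : rel 'I_n) (S T : {set 'I_n}) : pred {set 'I_n} :=
  fun F => [&& T \subset F, F \subset S & indep e (S :\: F)].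

Lemma indepS n (e : rel 'I_n) (W1 W2 : {set 'I_n}) :
  W1 \subset W2 -> indep e W2 -> indep e W1.
Proof.
move=> s; apply: contra => /existsP[u /existsP[v /and3P[euv uW vW]]].
by apply/existsP; exists u; apply/existsP; exists v; rewrite euv !(subsetP s).
Qed.

Lemma indepU1 n (e : rel 'I_n) (sym : symmetric e) (irr : irreflexive e) (v : 'I_n) W :
  indep e (v |: W) = indep e W && [forall w in W, ~~ e v w].
Proof.
apply/idP/andP => [H | [H1 /forall_inP H2]].
  split; first by apply: indepS H; apply: subsetUr.
  apply/forall_inP => w wW; apply/negP => evw; move/negP: H; apply.
  by apply/existsP; exists v; apply/existsP; exists w; rewrite evw setU11 setU1r.
apply/negP => /existsP[x /existsP[y /and3P[exy]]]; rewrite !inE.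
case/orP => [/eqP xv|xW]; case/orP => [/eqP yv|yW].
- by rewrite xv yv irr in exy.
- by move: (H2 _ yW); rewrite -xv exy.
- by move: (H2 _ xW); rewrite (sym v x) -yv exy.
- move/negP: H1; apply.
  by apply/existsP; exists x; apply/existsP; exists y; rewrite exy xW yW.
Qed.

Lemma iso_hh (K : fieldType) n (e : rel 'I_n) (sym : symmetric e) (irr : irreflexive e)
  (S T : {set 'I_n}) v i :
  v \in S :\: T -> (forall w, w \in S :\: T -> ~~ e v w) -> hh K (gST e S T) i = 0%N.
Proof.
move=> vU iso; apply: (@cone_hh K n _ v i) => F vF.
move: (vU); rewrite inE => /andP[vT vS].
rewrite /gST.
have -> : (T \subset v |: F) = (T \subset F).
  apply/idP/idP => sT; last by apply: (subset_trans sT); apply: subsetUr.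
  apply/subsetP => x xT; have := subsetP sT x xT; rewrite !inE => /orP[/eqP xv|] //.
  by rewrite -xv xT in vT.
have -> : (v |: F \subset S) = (F \subset S) by rewrite subUset sub1set vS.
case sTF: (T \subset F) => //=; case: (F \subset S) => //=.
have -> : S :\: F = v |: (S :\: (v |: F)).
  apply/setP => x; rewrite !inE; case: eqP => [->|_] /=; by rewrite ?vF ?vS.
rewrite indepU1 //.
have -> : [forall w in S :\: (v |: F), ~~ e v w].
  apply/forall_inP => w; rewrite !inE => /andP[/norP[wv wF] wS]; apply: iso.
  rewrite !inE wS andbT; apply/negP => wT; move/negP: wF; apply.
  exact: (subsetP sTF).
by rewrite andbT.
Qed.

Lemma hh_nz_deg (K : fieldType) n (good : pred {set 'I_n}) i :
  hh K good i != 0%N -> exists F, good F /\ #|F| = i.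
Proof.
rewrite /hh; case: (set_0Vmem (deg good i)) => [->|[F]]; first by rewrite cards0.
by rewrite inE => /andP[gF /eqP cF] _; exists F.
Qed.

Lemma step (K : fieldType) n (e : rel 'I_n) (sym : symmetric e) (irr : irreflexive e)
  (S T : {set 'I_n}) v i :
  T \subset S -> v \in S :\: T -> hh K (gST e S T) i != 0%N ->
  hh K (gST e S (v |: T)) i != 0%N \/
  hh K (gST e (S :\ v) (T :|: (S :&: [set w | e v w]))) i != 0%N.
Proof.
move=> sTS vU H.
move: (vU); rewrite inE => /andP[vT vS].
have eX : (fun F => gST e S T F && (v \in F)) =1 gST e S (v |: T).
  move=> F; rewrite /gST subUset sub1set.
  by case: (v \in F); case: (T \subset F); rewrite /= ?andbT ?andbF.
have eY : (fun F => gST e S T F && (v \notin F)) =1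
          gST e (S :\ v) (T :|: (S :&: [set w | e v w])).
  move=> F; rewrite /gST subUset.
  case vF: (v \in F) => /=.
    have -> : (F \subset S :\ v) = false by rewrite subsetD1 vF andbF.
    by rewrite andbF /= andbF.
  rewrite andbT subsetD1 vF andbT.
  have -> : S :\: F = v |: ((S :\ v) :\: F).
    by apply/setP => x; rewrite !inE; case: eqP => [->|_] /=; rewrite ?vF ?vS.
  rewrite indepU1 //.
  have -> : [forall w in (S :\ v) :\: F, ~~ e v w] = (S :&: [set w | e v w] \subset F).
    apply/forall_inP/subsetP => [Hf x|Hs w].
      rewrite !inE => /andP[xS evx]; apply/negPn/negP => xF.
      have xv : x != v by apply/eqP => xv; rewrite xv irr in evx.
      by move: (Hf x); rewrite !inE xF xv xS evx => /(_ isT).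
    rewrite !inE => /and3P[wF wv wS]; apply/negP => evw.
    by move: (Hs w); rewrite !inE wS evw (negbTE wF) => /(_ isT).
  by case: (T \subset F); case: (F \subset S); case: (indep _ _); case: (_ \subset F).
have hs := hh_split K (gST e S T) v i.
rewrite (hh_ext K i eX) (hh_ext K i eY) in hs.
case: (boolP (hh K (gST e S (v |: T)) i != 0%N)) => [hX|]; first by left.
rewrite negbK => /eqP hX0; right.
apply/eqP => h0; move: hs; rewrite hX0 h0 leqn0 => /eqP h.
by rewrite h in H.
Qed.

Lemma base_bound (K : fieldType) n (e : rel 'I_n) (S T : {set 'I_n}) i :
  T \subset S -> S :\: T = set0 -> hh K (gST e S T) i != 0%N -> (#|S| <= i)%N.
Proof.
move=> sTS U0 /hh_nz_deg [F [/and3P[sTF sFS _] cF]].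
have sST : S \subset T by rewrite -setD_eq0 U0.
have -> : S = F by apply/eqP; rewrite eqEsubset (subset_trans sST sTF) sFS.
by rewrite cF.
Qed.

Lemma step_bound (K : fieldType) n (e : rel 'I_n) (sym : symmetric e) (irr : irreflexive e)
  (S T : {set 'I_n}) v i (P : {set 'I_n} -> {set 'I_n} -> Prop) :
  T \subset S -> v \in S :\: T -> hh K (gST e S T) i != 0%N ->
  (forall S' T' : {set 'I_n}, T' \subset S' -> hh K (gST e S' T') i != 0%N -> P S' T') ->
  P S (v |: T) \/ P (S :\ v) (T :|: (S :&: [set w | e v w])).
Proof.
move=> sTS vU H IH.
have [vT vS] : v \notin T /\ v \in S by move: vU; rewrite inE => /andP.
case: (step sym irr sTS vU H) => [HX|HY]; [left|right]; apply: IH => //.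
  by rewrite subUset sub1set vS sTS.
apply/subsetP => x; rewrite !inE => /orP[xT|/andP[xS evx]].
  rewrite (subsetP sTS x xT) andbT; apply/eqP => xv; by rewrite -xv xT in vT.
by rewrite xS andbT; apply/eqP => xv; rewrite xv irr in evx.
Qed.

Lemma main_bound (K : fieldType) n (e : rel 'I_n) (sym : symmetric e) (irr : irreflexive e)
  u : forall (S T : {set 'I_n}) i,
  T \subset S -> (#|S :\: T| <= u)%N -> hh K (gST e S T) i != 0%N ->
  (2 * (#|S| - i) <= #|S :\: T|)%N.
Proof.
elim: u => [|u IH] S T i sTS hu H.
  have U0 : S :\: T = set0 by apply/eqP; rewrite -cards_eq0 -leqn0.
  have := base_bound sTS U0 H; lia.
case: (set_0Vmem (S :\: T)) => [U0|[v vU]].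
  have := base_bound sTS U0 H; lia.
case: (boolP [forall w in S :\: T, ~~ e v w]) => [/forall_inP iso|].
  by rewrite (iso_hh K sym irr i vU iso) in H.
rewrite negb_forall_in => /exists_inP[w wU /negPn evw].
have [vT vS] : v \notin T /\ v \in S by move: vU; rewrite inE => /andP.
have [wT wS] : w \notin T /\ w \in S by move: wU; rewrite inE => /andP.
have wv : w != v by apply/eqP => wv; rewrite wv irr in evw.
have cU : #|S :\: T| = (#|(S :\: T) :\ v| + 1)%N by rewrite (cardsD1 v (S:\:T)) vU addnC.
have c2 : #|(S :\: T) :\ v| = (#|((S :\: T) :\ v) :\ w| + 1)%N.
  by rewrite (cardsD1 w ((S:\:T) :\ v)) !inE wv wT wS addnC.
have cS : #|S| = (#|S :\ v| + 1)%N by rewrite (cardsD1 v S) vS addnC.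
case: (step_bound (P := fun S' T' => (#|S' :\: T'| <= u)%N ->
          (2 * (#|S'| - i) <= #|S' :\: T'|)%N) sym irr sTS vU H).
- by move=> S' T' s h hu'; apply: (IH S' T' i s hu' h).
- have e1 : S :\: (v |: T) = (S :\: T) :\ v.
    by apply/setP => x; rewrite !inE negb_or andbA.
  rewrite e1 => h; have := h ltac:(lia); lia.
- set T' := T :|: (S :&: [set w | e v w]).
  have sub : (S :\ v) :\: T' \subset ((S :\: T) :\ v) :\ w.
    apply/subsetP => x; rewrite !inE => /andP[/norP[xT xN] /andP[xv xS]].
    rewrite xv xT xS /= !andbT; apply/eqP => xw; move: xN; by rewrite xw wS evw.
  have cc := subset_leq_card sub.
  move=> h; have := h ltac:(lia); lia.
Qed.

Lemma deg2 n (e : rel 'I_n) (sym : symmetric e) :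
  (3 <= n)%N -> (forall u v : 'I_n, connect e u v) ->
  exists v w1 w2 : 'I_n, [/\ w1 != w2, e v w1 & e v w2].
Proof.
move=> n3 conn.
case: (boolP [exists v, exists w1, exists w2, [&& w1 != w2, e v w1 & e v w2]]).
  by move=> /existsP[v /existsP[w1 /existsP[w2 /and3P[H1 H2 H3]]]]; exists v, w1, w2.
move=> H; exfalso.
have uq : forall v w1 w2, e v w1 -> e v w2 -> w1 = w2.
  move=> v w1 w2 h1 h2; apply/eqP; apply/negPn/negP => ne; move: H.
  rewrite negb_exists => /forallP /(_ v); rewrite negb_exists => /forallP /(_ w1).
  by rewrite negb_exists => /forallP /(_ w2); rewrite ne h1 h2.
have reach : forall x y, connect e x y -> (y == x) || e x y.
  move=> x y /connectP[p pth ->] {y}.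
  elim/last_ind: p pth => [|p z IHp] /=; first by rewrite eqxx.
  rewrite rcons_path last_rcons => /andP[pp ez].
  case/orP: (IHp pp) => [/eqP yx| exy].
    by rewrite yx in ez; rewrite ez orbT.
  have -> : z = x by apply: (uq (last x p)); [exact: ez | rewrite sym; exact: exy].
  by rewrite eqxx.
have h0 : (0 < n)%N by lia.
have h1 : (1 < n)%N by lia.
have h2 : (2 < n)%N by lia.
case/orP: (reach _ _ (conn (Ordinal h0) (Ordinal h1))) => [/eqP/(congr1 val) //|e1].
case/orP: (reach _ _ (conn (Ordinal h0) (Ordinal h2))) => [/eqP/(congr1 val) //|e2].
by have /(congr1 val) := uq _ _ _ e1 e2.
Qed.

Lemma in_edge_ext n (e : rel 'I_n) (b1 b2 : 'I_n -> nat) :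
  (forall x, (0 < b1 x)%N = (0 < b2 x)%N) -> in_edge_ideal e b1 = in_edge_ideal e b2.
Proof.
move=> E; rewrite /in_edge_ideal; apply: eq_existsb => u; apply: eq_existsb => w.
by rewrite !E.
Qed.

Lemma cardT1 n (v : 'I_n) : #|[set: 'I_n] :\ v| = (n - 1)%N.
Proof.
have c := cardsD1 v [set: 'I_n]; rewrite inE in c.
have cT : #|[set: 'I_n]| = n by rewrite cardsT card_ord.
move: c cT; set x := #|_ :\ v|; set y := #|[set: _]|; lia.
Qed.

Lemma cardT3 n (v w1 w2 : 'I_n) : w1 != v -> w2 != v -> w1 != w2 ->
  #|[set: 'I_n] :\ v :\ w1 :\ w2| = (n - 3)%N.
Proof.
move=> w1v w2v w12.
have c1 := cardsD1 v [set: 'I_n].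
have c2 := cardsD1 w1 ([set: 'I_n] :\ v).
have c3 := cardsD1 w2 ([set: 'I_n] :\ v :\ w1).
rewrite !inE w1v w2v eq_sym w12 /= in c1 c2 c3.
have cT : #|[set: 'I_n]| = n by rewrite cardsT card_ord.
move: c1 c2 c3 cT.
set t := #|[set: _]|; set x := #|_ :\ v|; set y := #|_ :\ w1|; set z := #|_ :\ w2|.
lia.
Qed.

Theorem proposition2p9 (K : fieldType) (n : nat) (e : rel 'I_n) :
  (3 <= n)%N -> symmetric e -> irreflexive e ->
  (forall u v : 'I_n, connect e u v) ->
  forall i j : nat, betti K e i j != 0%N -> (2 * j < n + 2 * i)%N.
Proof.
move=> n3 sym irr conn i j.
rewrite /betti.
case: (boolP [exists a : {ffun 'I_n -> 'I_j.+1}, (\sum_k val (a k) == j)%N &&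
          (betti_mg K e (fun k => val (a k)) i != 0%N)]); last first.
  move=> H; rewrite big1 ?eqxx // => a Pa; move: H.
  by rewrite negb_exists => /forallP /(_ a); rewrite Pa /= negbK => /eqP.
move=> /existsP[a /andP[/eqP sa bnz]] _.
set b := fun k => val (a k) in sa bnz.
rewrite betti_mg_hh in bnz.
case: (boolP [exists k, (1 < b k)%N]) => [/existsP[k bk]|].
  have bk0 : (0 < b k)%N by lia.
  rewrite (@cone_hh K n _ k i) // in bnz => F kF.
  rewrite /kbasis.
  have -> : [forall x in k |: F, 0 < b x]%N = [forall x in F, 0 < b x]%N.
    apply/forall_inP/forall_inP => h x xin; first by apply: h; rewrite inE xin orbT.
    by move: xin; rewrite !inE => /orP[/eqP -> //|]; exact: h.
  congr andb; congr negb; apply: in_edge_ext => x; rewrite /shift_exp !inE.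
  case: eqP => [->|_] /=; last by [].
  by rewrite (negbTE kF) subn0 subn_gt0 bk bk0.
rewrite negb_exists => /forallP hb.
pose S := [set k | (0 < b k)%N].
have eK : kbasis e b =1 gST e S set0.
  move=> F; rewrite /kbasis /gST sub0set /=.
  have -> : [forall x in F, 0 < b x]%N = (F \subset S).
    apply/forall_inP/subsetP => h x xF; first by rewrite inE; exact: h.
    by have := h x xF; rewrite inE.
  congr (_ && _); rewrite /indep /in_edge_ideal; congr negb.
  apply: eq_existsb => u; apply: eq_existsb => w.
  have E x : (0 < shift_exp b F x)%N = (x \in S :\: F).
    rewrite /shift_exp !inE; case: (x \in F) => /=.
      by rewrite subn_gt0 (negbTE (hb x)).
    by rewrite subn0.
  by rewrite !E.
have jS : j = #|S|.
  rewrite -sa -sum1_card [RHS]big_mkcond /=; apply: eq_bigr => k _; rewrite inE.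
  by have := hb k; rewrite /b; case: (a k) => m hm /=; case: m hm => [|[|m]].
rewrite (hh_ext K i eK) in bnz.
rewrite jS.
case: (boolP (S == setT)) => [/eqP ST|SnT]; last first.
  have h := @main_bound K n e sym irr #|S| S set0 i (sub0set S) _ bnz.
  rewrite setD0 in h; have := h (leqnn _).
  have : (#|S| < #|[set: 'I_n]|)%N by apply: proper_card; rewrite properT.
  have : #|[set: 'I_n]| = n by rewrite cardsT card_ord.
  move=> cT; rewrite cT; set x := #|S|; clearbody x; clear -x; lia.
rewrite ST in bnz *.
have [v [w1 [w2 [w12 ev1 ev2]]]] := deg2 sym n3 conn.
have w1v : w1 != v by apply/eqP => wv; rewrite wv irr in ev1.
have w2v : w2 != v by apply/eqP => wv; rewrite wv irr in ev2.
have vU : v \in [set: 'I_n] :\: set0 by rewrite setD0 inE.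
rewrite cardsT card_ord.
case: (step_bound (P := fun S' T' => (2 * (#|S'| - i) <= #|S' :\: T'|)%N)
        sym irr (sub0set _) vU bnz).
- move=> S' T' s h.
  exact: (@main_bound K n e sym irr #|S' :\: T'| S' T' i s (leqnn _) h).
- rewrite setU0 cardsT card_ord cardT1 => h; lia.
- set T' := _ :|: _ => h.
  have sub : ([set: 'I_n] :\ v) :\: T' \subset [set: 'I_n] :\ v :\ w1 :\ w2.
    apply/subsetP => x; rewrite !inE /= andbT => /andP[xN xv].
    rewrite xv andbT; apply/andP; split; apply/eqP => xw; move: xN;
      by rewrite xw ?ev1 ?ev2.
  have := leq_trans h (subset_leq_card sub).
  rewrite cardT1 cardT3 //; lia.
Qed.
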